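(* Let $N\ge1$, $\lambda,\mu\in\mathbb{K}$, $\mu\ne0$. The Lie algebra $\mathfrak{g}^{(2)}(N,\lambda,\mu)_+$ is isomorphic to $V^{\oplus N}\rtimes\mathfrak{g}_0$, where $\mathfrak{g}_0$ is the one-dimensional abelian Lie algebra spanned by $z$ and $V$ is the right $\mathfrak{g}_0$-module with basis $(f_i)_{i\ge0}$ and action $f_i.z=f_{i+1}$.
   Context: Base field $\mathbb{K}$ of characteristic zero. $\mathfrak{g}^{(2)}(N,\lambda,\mu)$ is $\mathbb{K}[X]$ with the preLie product $X^i\bullet X^j=i\lambda X^i$ if $j=0$, $i\mu X^{i+N}$ if $j=N$, and $0$ otherwise. $\mathfrak{g}^{(2)}(N,\lambda,\mu)_+$ denotes $\mathbb{K}[X]_+=\mathrm{Vect}(X^i,i\ge1)$ with bracket $[P,Q]=P\bullet Q-Q\bullet P$. For a Lie algebra $\mathfrak{g}$ and a right $\mathfrak{g}$-module $M$, $M\rtimes\mathfrak{g}$ is $M\oplus\mathfrak{g}$ with $M$ abelian, $[m,x]=m.x$ for $m\in M$, $x\in\mathfrak{g}$, and the bracket of $\mathfrak{g}$ on $\mathfrak{g}$. *)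

(* Defs.v *)
From HB Require Import structures.
From mathcomp Require Import all_boot all_order all_algebra.
Set Implicit Arguments. Unset Strict Implicit. Unset Printing Implicit Defensive.
Import Order.TTheory GRing.Theory Num.Theory.
Local Open Scope ring_scope.

Definition g2_basis (K : fieldType) (N : nat) (lam mu : K) (i j : nat) : {poly K} :=
  if j == 0%N then (i%:R * lam) *: 'X^i
  else if j == N then (i%:R * mu) *: 'X^(i + N)
  else 0.

Definition g2_prod (K : fieldType) (N : nat) (lam mu : K) (P Q : {poly K}) : {poly K} :=
  \sum_(i < size P) \sum_(j < size Q) (P`_i * Q`_j) *: g2_basis N lam mu i j.

Definition g2_bracket (K : fieldType) (N : nat) (lam mu : K) (P Q : {poly K}) : {poly K} :=
  g2_prod N lam mu P Q - g2_prod N lam mu Q P.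

Definition in_plus (K : fieldType) (P : {poly K}) : Prop := P`_0 = 0.

(* V is realised as K[t] with basis f_i := t^i ('X^i);
   V^{(+)N} as {ffun 'I_N -> {poly K}};
   g_0 = K z, an element c z being represented by c : K.
   Right action: f_i . z = f_{i+1}, i.e. m . (c z) = c t m, componentwise. *)
Definition Vsum (K : fieldType) (N : nat) := {ffun 'I_N -> {poly K}}.

Definition V_act (K : fieldType) (N : nat) (m : Vsum K N) (c : K) : Vsum K N :=
  [ffun k => c *: ('X * m k)].

Definition SD (K : fieldType) (N : nat) : Type := (Vsum K N * K)%type.

Definition SD_add (K : fieldType) (N : nat) (u v : SD K N) : SD K N :=
  (u.1 + v.1, u.2 + v.2).
Definition SD_scale (K : fieldType) (N : nat) (a : K) (u : SD K N) : SD K N :=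
  (a *: u.1, a * u.2).

(* [(m,x),(m',x')] = [m,m'] + [m,x'] + [x,m'] + [x,x']
                   = 0 + m.x' - m'.x + 0   (M abelian, g_0 abelian) *)
Definition SD_bracket (K : fieldType) (N : nat) (u v : SD K N) : SD K N :=
  (V_act u.1 v.2 - V_act v.1 u.2, 0).

(* Main.v *)
Require Import Defs.
From HB Require Import structures.
From mathcomp Require Import all_boot all_order all_algebra.
From mathcomp Require Import ring lra zify.
Import GRing.Theory.
Set Implicit Arguments.
Local Open Scope ring_scope.
Section Aux.
Variable K : fieldType.

Lemma sum_two (N : nat) (hN : (0 < N)%N) (Q : {poly K}) (g : nat -> {poly K})
  (hg : forall j, j != 0%N -> j != N -> g j = 0) (n : nat) :
  \sum_(j < n) Q`_j *: g j =
    (if (0 < n)%N then Q`_0 *: g 0%N else 0) + (if (N < n)%N then Q`_N *: g N else 0).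
Proof.
elim: n => [|n IH]; first by rewrite big_ord0 /= addr0.
rewrite big_ord_recr /= IH.
have [->|n0] := eqVneq n 0%N.
  have -> : (N < 1)%N = false by lia.
  have -> : (N < 0)%N = false by lia.
  by rewrite /= !addr0 add0r.
have [->|nN] := eqVneq n N.
  have -> : (N < N.+1)%N = true by lia.
  have -> : (N < N)%N = false by lia.
  have -> : (0 < N)%N = true by lia.
  by rewrite addr0.
rewrite (hg n) // scaler0 addr0.
have -> : (0 < n)%N = true by lia.
by have -> : (N < n.+1)%N = (N < n)%N by lia.
Qed.
Definition dP (P : {poly K}) := \poly_(i < size P) (i%:R * P`_i).

Lemma if_coef (Q : {poly K}) k (x : {poly K}) :
  (if (k < size Q)%N then Q`_k *: x else 0) = Q`_k *: x.
Proof. by case: ifP => // /negbT; rewrite -leqNgt => h; rewrite nth_default // scale0r. Qed.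

Lemma g2_prodE (N : nat) (hN : (0 < N)%N) lam mu (P Q : {poly K}) :
  g2_prod N lam mu P Q = (Q`_0 * lam) *: dP P + (Q`_N * mu) *: (dP P * 'X^N).
Proof.
rewrite /g2_prod /dP poly_def.
under eq_bigr => i _.
  under eq_bigr => j _ do rewrite mulrC -scalerA.
  rewrite (@sum_two N hN Q (fun j => P`_i *: g2_basis N lam mu i j)); last first.
    by move=> j j0 jN; rewrite /g2_basis (negbTE j0) (negbTE jN) scaler0.
  rewrite !if_coef /g2_basis eqxx.
  have -> : (N == 0%N) = false by lia.
  rewrite eqxx exprD.
over.
rewrite big_split /= scaler_sumr mulr_suml scaler_sumr; congr (_ + _); apply: eq_bigr => i _.
  by rewrite !scalerA; congr (_ *: _); ring.
by rewrite -scalerAl !scalerA; congr (_ *: _); ring.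
Qed.
End Aux.

Local Open Scope nat_scope.
Definition idx (N k l : nat) := if k == 0%N then ((l+2)*N)%N else (k + l*N)%N.
Lemma t1 N k l : 0 < N -> k < N -> (idx N k l) %% N = k.
Proof. move=> h1 h2; rewrite /idx; case: ifP => /eqP h; subst. 
 - by rewrite modnMl.
 - by rewrite addnC modnMDl modn_small. Qed.
Lemma t2 N m : 0 < N -> 0 < m -> m != N -> idx N (m %% N) (if m %% N == 0 then m %/ N - 2 else m %/ N) = m.
Proof. move=> h1 h2 h3; rewrite /idx; case: ifP => /eqP h; [rewrite h /= | ].
  have := divn_eq m N; rewrite h addn0 => e. rewrite {2}e. have : m %/ N != 1. apply/eqP=> e1. rewrite e1 mul1n in e. by rewrite e eqxx in h3.
  have : m %/ N != 0. apply/eqP=> e1. rewrite e1 mul0n in e. by rewrite e in h2.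
  move=> a b. clear e h. rewrite subnK //. move: a b; case: (m %/ N) => [|[|q]] //.
  rewrite ifN; [have := divn_eq m N; lia | by apply/eqP]. Qed.
Lemma t3 N k l : 0 < N -> k < N -> (if idx N k l %% N == 0 then idx N k l %/ N - 2 else idx N k l %/ N) = l.
Proof. move=> h1 h2; rewrite t1 //; rewrite /idx; case: ifP => /eqP h; subst; rewrite /=. by rewrite mulnK // addnK.
 rewrite ifN; last by apply/eqP. by rewrite addnC divnMDl // divn_small // addn0. Qed.

Lemma idx_ge N k l : (0 < N)%N -> (l <= idx N k l)%N.
Proof. move=> h; rewrite /idx; case: ifP => _; nia. Qed.
Lemma idx_pos N k l : (0 < N)%N -> (0 < idx N k l)%N.
Proof. move=> h; rewrite /idx; case: ifP => /eqP; nia. Qed.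
Lemma idxS N k l : idx N k l.+1 = (idx N k l + N)%N.
Proof. rewrite /idx; case: ifP => _; nia. Qed.
Lemma idx_neqN N k l : (0 < N)%N -> (k < N)%N -> idx N k l != N.
Proof. move=> h1 h2; rewrite /idx; case: ifP => /eqP h; apply/eqP; [rewrite addn2 !mulSn; lia | case: l => [|l]; [rewrite mul0n addn0; lia | rewrite mulSn; lia]]. Qed.
Lemma idx0 N k : k != 0%N -> idx N k 0 = k.
Proof. by move=> h; rewrite /idx (negbTE h) mul0n addn0. Qed.

Local Open Scope ring_scope.
Section Main.
Variable K : fieldType.
Hypothesis charK0 : [pchar K] =i pred0.

Definition cc (N k l : nat) : K := ((\prod_(m < l) idx N k m)%N%:R)^-1.

Lemma natr_neq0 (n : nat) : (0 < n)%N -> (n%:R : K) != 0.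
Proof. by move=> h; rewrite (pcharf0P _).1 // -lt0n. Qed.

Lemma cc_neq0 N k l : (0 < N)%N -> cc N k l != 0.
Proof.
move=> h; rewrite /cc invr_eq0 natr_neq0 // prodn_gt0 // => i; exact: idx_pos.
Qed.

Lemma ccS N k l : cc N k l.+1 = cc N k l / (idx N k l)%:R.
Proof. by rewrite /cc big_ord_recr /= natrM invfM. Qed.

Definition pc (N : nat) (P : {poly K}) (k : nat) : {poly K} :=
  \poly_(l < size P) (P`_(idx N k l) * cc N k l).

Definition phi (N : nat) (mu : K) (P : {poly K}) : SD K N :=
  ([ffun k : 'I_N => pc N P k], mu * P`_N).

Lemma coef_pc N P k l : (0 < N)%N ->
  (pc N P k)`_l = P`_(idx N k l) * cc N k l.
Proof.
move=> h; rewrite /pc coef_poly; case: ifP => // /negbT; rewrite -leqNgt => hl.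
by rewrite nth_default ?mul0r // (leq_trans hl) // idx_ge.
Qed.

Lemma coef_phi1 N mu P (k : 'I_N) l : (0 < N)%N ->
  ((phi N mu P).1 k)`_l = P`_(idx N k l) * cc N k l.
Proof. by move=> h; rewrite /phi /= ffunE coef_pc. Qed.

Lemma coef_dP (P : {poly K}) i : (dP P)`_i = i%:R * P`_i.
Proof. by rewrite coef_poly; case: ifP => // /negbT; rewrite -leqNgt => h; rewrite nth_default ?mulr0. Qed.

Lemma br_coef N (hN : (0 < N)%N) lam mu (P Q : {poly K}) m :
  P`_0 = 0 -> Q`_0 = 0 ->
  (g2_bracket N lam mu P Q)`_m = mu * (Q`_N * (if (m < N)%N then 0 else (m-N)%:R * P`_(m-N))
      - P`_N * (if (m < N)%N then 0 else (m-N)%:R * Q`_(m-N))).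
Proof.
move=> P0 Q0; rewrite /g2_bracket !g2_prodE // coefB !coefD !coefZ !coefMXn P0 Q0 !coef_dP.
by case: ifP => _; ring.
Qed.


Lemma idx_lt3 N k l : (0 < N)%N -> (k < N)%N -> (idx N k l < (l + 3) * N)%N.
Proof.
move=> h1 h2; rewrite /idx; case: ifP => _.
  by rewrite ltn_pmul2r // ltn_add2l.
by rewrite addn3 !mulSn; lia.
Qed.

End Main.

Theorem mainTheorem16 (K : fieldType) (charK0 : [pchar K] =i pred0)
    (N : nat) (hN : (1 <= N)%N) (lam mu : K) (hmu : mu != 0) :
  exists phi : {poly K} -> SD K N,
    (forall (a : K) (P Q : {poly K}),
        phi (a *: P + Q) = SD_add (SD_scale a (phi P)) (phi Q)) /\
    (forall P Q : {poly K}, in_plus P -> in_plus Q -> phi P = phi Q -> P = Q) /\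
    (forall w : SD K N, exists P : {poly K}, in_plus P /\ phi P = w) /\
    (forall P Q : {poly K}, in_plus P -> in_plus Q ->
        phi (g2_bracket N lam mu P Q) = SD_bracket (phi P) (phi Q)).
Proof.
have hN0 : (0 < N)%N := hN.
exists (phi N mu); split; [|split; [|split]].
- move=> a P Q; rewrite /SD_add /SD_scale; congr (_, _).
    apply/ffunP => k; apply/polyP => l.
    rewrite !ffunE coefD coefZ !coef_pc // coefD coefZ; ring.
  rewrite /phi /= coefD coefZ; ring.
- move=> P Q P0 Q0 e; apply/polyP => m.
  have [->|m0] := eqVneq m 0%N; first by rewrite P0 Q0.
  have [->|mN] := eqVneq m N.
    by move: (congr1 snd e) => /= /(mulfI hmu).
  pose k := Ordinal (ltn_pmod m hN0).
  pose l := (if m %% N == 0 then m %/ N - 2 else m %/ N)%N.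
  move: (congr1 (fun w : SD K N => ((w.1 k)`_l)) e) => /=.
  rewrite !coef_phi1 //= /l t2 // ?lt0n //.
  by move/(mulIf (cc_neq0 charK0 _ _ _ hN0)).
- case=> f x.
  pose B := ((\max_(k : 'I_N) size (f k) + 3) * N)%N.
  pose kinv m : 'I_N := Ordinal (ltn_pmod m hN0).
  pose linv m := (if m %% N == 0 then m %/ N - 2 else m %/ N)%N.
  pose g m := if m == N then x / mu else if m == 0%N then 0
              else (f (kinv m))`_(linv m) / cc K N (kinv m) (linv m).
  exists (\poly_(m < B) g m); split.
    rewrite /in_plus coef_poly; case: ifP => // _.
    by rewrite /g (_ : (0 == N)%N = false) ?eqxx //; lia.
  have h1 : (phi N mu (\poly_(m < B) g m)).1 = f.
    apply/ffunP => k; apply/polyP => l; rewrite coef_phi1 // coef_poly.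
    case: ifP => hB.
      rewrite /g (negbTE (@idx_neqN N k l hN0 (ltn_ord k))).
      rewrite (_ : (idx N k l == 0)%N = false); last by have := @idx_pos N k l hN0; lia.
      have kk : kinv (idx N k l) = k by apply: val_inj; rewrite /= t1.
      rewrite kk /linv t3 //.
      by rewrite divfK // (cc_neq0 charK0).
    rewrite mul0r nth_default //; rewrite leqNgt; apply/negP => hl.
    move/negbT: hB; rewrite -leqNgt => hB.
    have := @leq_bigmax _ (fun k : 'I_N => size (f k)) k => /= hm.
    have := @idx_lt3 N k l hN0 (ltn_ord k).
    have : ((l + 3) * N <= B)%N.
      by rewrite /B leq_mul2r; apply/orP; right; rewrite leq_add2r (leq_trans _ hm) // ltnW.
    lia.
  have h2 : (phi N mu (\poly_(m < B) g m)).2 = x.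
    rewrite /phi /= coef_poly.
    have -> : (N < B)%N.
      rewrite /B mulnDl; have := leq_pmull 1 hN0; lia.
    by rewrite /g eqxx mulrCA divff // mulr1.
  by case: (phi N mu _) h1 h2 => ? ? /= -> ->.
- move=> P Q P0 Q0.
  rewrite /SD_bracket; congr (_, _); last first.
    rewrite /phi /= br_coef // ltnn subnn P0 Q0; ring.
  apply/ffunP => k; apply/polyP => l.
  rewrite /V_act !ffunE coefB !coefZ !coefXM coef_pc // br_coef //.
  case: l => [|l].
    rewrite eqxx.
    have [k0|k0] := eqVneq (val k) 0%N.
      have e1 : (idx N k 0 < N)%N = false by rewrite /idx k0 /=; lia.
      have e2 : (idx N k 0 - N)%N = N by rewrite /idx k0 /=; lia.
      rewrite e1 e2; ring.
    by rewrite idx0 // ltn_ord; ring.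
  rewrite /= !coef_pc // idxS ccS.
  have -> : (idx N k l + N < N)%N = false by lia.
  rewrite addnK; field.
  by rewrite (natr_neq0 charK0) // idx_pos.
Qed.
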